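(* Let $\mathbb{F}$ be an algebraically closed field with $\mathrm{char}\,\mathbb{F}=2$. Let $\underline{a},\underline{b}\in\mathbf{O}^n$, let $A\in{\rm GL}_n(\mathbb{F})$, and put $\underline{a}'=\underline{a}A$, $\underline{b}'=\underline{b}A$. Then: (a) ${\rm G}_2\underline{a}={\rm G}_2\underline{b}$ if and only if ${\rm G}_2\underline{a}'={\rm G}_2\underline{b}'$; (b) for every $d\ge2$, $f(\underline{a})=f(\underline{b})$ for all $f\in S_n^{(d)}$ if and only if $f(\underline{a}')=f(\underline{b}')$ for all $f\in S_n^{(d)}$; (c) the orbit ${\rm G}_2\underline{a}$ is Zariski closed in $\mathbf{O}^n$ if and only if ${\rm G}_2\underline{a}'$ is Zariski closed in $\mathbf{O}^n$.
   Context: The split octonion algebra $\mathbf{O}$ is the 8-dimensional $\mathbb{F}$-vector space of formal matrices $a=\begin{pmatrix}\alpha&\mathbf{u}\\ \mathbf{v}&\beta\end{pmatrix}$ with $\alpha,\beta\in\mathbb{F}$, $\mathbf{u},\mathbf{v}\in\mathbb{F}^3$, with multiplication $\begin{pmatrix}\alpha&\mathbf{u}\\ \mathbf{v}&\beta\end{pmatrix}\begin{pmatrix}\alpha'&\mathbf{u}'\\ \mathbf{v}'&\beta'\end{pmatrix}=\begin{pmatrix}\alpha\alpha'+\mathbf{u}\cdot\mathbf{v}'&\alpha\mathbf{u}'+\beta'\mathbf{u}-\mathbf{v}\times\mathbf{v}'\\ \alpha'\mathbf{v}+\beta\mathbf{v}'+\mathbf{u}\times\mathbf{u}'&\beta\beta'+\mathbf{v}\cdot\mathbf{u}'\end{pmatrix}$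 (dot product and cross product on $\mathbb{F}^3$). Trace $\mathrm{tr}(a)=\alpha+\beta$, norm $n(a)=\alpha\beta-\mathbf{u}\cdot\mathbf{v}$. ${\rm G}_2=\mathrm{Aut}(\mathbf{O})$ acts diagonally on $\mathbf{O}^n$. ${\rm GL}_n(\mathbb{F})$ acts on $\mathbf{O}^n$ on the right: for $A=(\alpha_{ij})$, $(\underline{a}A)_i=\sum_{k=1}^n\alpha_{ki}a_k$. $S_n$ is the set of polynomial functions on $\mathbf{O}^n$ consisting of $\underline{a}\mapsto n(a_i)$ ($1\le i\le n$, degree $2$) and $\underline{a}\mapsto\mathrm{tr}((\cdots((a_{i_1}a_{i_2})a_{i_3})\cdots)a_{i_k})$ for $k\ge1$, $1\le i_1<\cdots<i_k\le n$ (degree $k$); $S_n^{(d)}$ is its subset of elements of degree at most $d$. *)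

(* Defs.v *)
From HB Require Import structures.
From mathcomp Require Import all_boot all_order all_algebra.
Set Implicit Arguments. Unset Strict Implicit. Unset Printing Implicit Defensive.
Import Order.TTheory GRing.Theory Num.Theory.
Local Open Scope ring_scope.

Section Octonions.
Variable F : fieldType.

(* Split octonion [[alpha, u], [v, beta]] with alpha, beta in F, u, v in F^3. *)
Record oct := Oct { o_a : F; o_u : 'rV[F]_3; o_v : 'rV[F]_3; o_b : F }.

Definition i0 : 'I_3 := @Ordinal 3 0 isT.
Definition i1 : 'I_3 := @Ordinal 3 1 isT.
Definition i2 : 'I_3 := @Ordinal 3 2 isT.

Definition dot3 (u v : 'rV[F]_3) : F := \sum_(k < 3) u 0 k * v 0 k.

Definition cross3 (u v : 'rV[F]_3) : 'rV[F]_3 :=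
  \row_(k < 3) match nat_of_ord k with
               | 0 => u 0 i1 * v 0 i2 - u 0 i2 * v 0 i1
               | 1 => u 0 i2 * v 0 i0 - u 0 i0 * v 0 i2
               | _ => u 0 i0 * v 0 i1 - u 0 i1 * v 0 i0
               end.

Definition omul (x y : oct) : oct :=
  Oct (o_a x * o_a y + dot3 (o_u x) (o_v y))
      (o_a x *: o_u y + o_b y *: o_u x - cross3 (o_v x) (o_v y))
      (o_a y *: o_v x + o_b x *: o_v y + cross3 (o_u x) (o_u y))
      (o_b x * o_b y + dot3 (o_v x) (o_u y)).

Definition oadd (x y : oct) : oct :=
  Oct (o_a x + o_a y) (o_u x + o_u y) (o_v x + o_v y) (o_b x + o_b y).

Definition oscale (c : F) (x : oct) : oct :=
  Oct (c * o_a x) (c *: o_u x) (c *: o_v x) (c * o_b x).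

Definition otr (x : oct) : F := o_a x + o_b x.
Definition onorm (x : oct) : F := o_a x * o_b x - dot3 (o_u x) (o_v x).

Definition is_G2 (g : oct -> oct) : Prop :=
  [/\ bijective g,
      (forall x y, g (oadd x y) = oadd (g x) (g y)),
      (forall c x, g (oscale c x) = oscale c (g x)) &
      (forall x y, g (omul x y) = omul (g x) (g y))].

Variable n : nat.

Definition G2act (g : oct -> oct) (a : 'I_n -> oct) : 'I_n -> oct := fun i => g (a i).
Definition G2orbit (a : 'I_n -> oct) : ('I_n -> oct) -> Prop :=
  fun x => exists g, is_G2 g /\ x = G2act g a.

Definition GLact (a : 'I_n -> oct) (A : 'M[F]_n) : 'I_n -> oct := fun i =>
  Oct (\sum_(k < n) A k i * o_a (a k))
      (\sum_(k < n) A k i *: o_u (a k))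
      (\sum_(k < n) A k i *: o_v (a k))
      (\sum_(k < n) A k i * o_b (a k)).

Definition lprod (a : 'I_n -> oct) (i : 'I_n) (s : seq 'I_n) : oct :=
  foldl (fun acc j => omul acc (a j)) (a i) s.

Definition inS (d : nat) (f : ('I_n -> oct) -> F) : Prop :=
  (exists i : 'I_n, (2 <= d)%N /\ f = (fun a => onorm (a i))) \/
  (exists (i : 'I_n) (s : seq 'I_n),
      sorted (fun p q : 'I_n => (p < q)%N) (i :: s) /\ (size (i :: s) <= d)%N /\
      f = (fun a => otr (lprod a i s))).

Inductive polyfun : (('I_n -> oct) -> F) -> Prop :=
  | pf_const c : polyfun (fun _ => c)
  | pf_a i : polyfun (fun x => o_a (x i))
  | pf_b i : polyfun (fun x => o_b (x i))
  | pf_u i j : polyfun (fun x => o_u (x i) 0 j)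
  | pf_v i j : polyfun (fun x => o_v (x i) 0 j)
  | pf_add f g : polyfun f -> polyfun g -> polyfun (fun x => f x + g x)
  | pf_mul f g : polyfun f -> polyfun g -> polyfun (fun x => f x * g x).

Definition zariski_closed (X : ('I_n -> oct) -> Prop) : Prop :=
  exists P : (('I_n -> oct) -> F) -> Prop,
    (forall f, P f -> polyfun f) /\
    (forall x, X x <-> (forall f, P f -> f x = 0)).

End Octonions.

(* Main.v *)
Require Import Defs.
From HB Require Import structures.
From mathcomp Require Import all_boot all_order all_algebra.
From mathcomp Require Import ring zify.
From Stdlib Require Import FunctionalExtensionality.
Set Implicit Arguments. Unset Strict Implicit. Unset Printing Implicit Defensive.
Import GRing.Theory.
Local Open Scope ring_scope.

Section Oc.
Variable F : fieldType.
Local Notation O := (oct F).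
Implicit Types (x y z u w : O) (c : F).

Definition ozero : O := Oct 0 0 0 0.
Definition oone : O := Oct 1 0 0 1.

Lemma ord3P (j : 'I_3) : [\/ j = i0, j = i1 | j = i2].
Proof.
case: j => [[|[|[|k]]] Hk]; [apply: Or31|apply: Or32|apply: Or33|by []]; exact/val_inj.
Qed.

Lemma dot3E (u v : 'rV[F]_3) : dot3 u v = u 0 i0 * v 0 i0 + u 0 i1 * v 0 i1 + u 0 i2 * v 0 i2.
Proof.
rewrite /dot3 !big_ord_recr big_ord0 /= add0r.
by congr (_ * _ + _ * _ + _ * _); congr (_ 0 _); apply/val_inj.
Qed.

Lemma octP (x y : O) : o_a x = o_a y -> o_b x = o_b y ->
  (forall j, o_u x 0 j = o_u y 0 j) -> (forall j, o_v x 0 j = o_v y 0 j) -> x = y.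
Proof.
case: x => xa xu xv xb; case: y => ya yu yv yb /= -> -> hu hv.
by congr Oct; apply/rowP => j; [apply: hu|apply: hv].
Qed.

Lemma octeta (x : O) : x = Oct (o_a x) (o_u x) (o_v x) (o_b x).
Proof. by case: x. Qed.

Ltac octring :=
  apply: octP => /=; rewrite /otr /onorm /= ?dot3E;
  try (let j := fresh "j" in intro j; case: (ord3P j) => ->); rewrite /= ?mxE /= ?dot3E /=; ring.

Lemma omulDl x w y : omul (oadd x w) y = oadd (omul x y) (omul w y).
Proof. case: x => ???? ; case: w => ????; case: y => ????; octring. Qed.
Lemma omulDr y x w : omul y (oadd x w) = oadd (omul y x) (omul y w).
Proof. case: x => ???? ; case: w => ????; case: y => ????; octring. Qed.
Lemma omulZl c x y : omul (oscale c x) y = oscale c (omul x y).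
Proof. case: x => ???? ; case: y => ????; octring. Qed.
Lemma omulZr c y x : omul y (oscale c x) = oscale c (omul y x).
Proof. case: x => ???? ; case: y => ????; octring. Qed.
Lemma omul1l x : omul oone x = x.
Proof. case: x => ????; octring. Qed.
Lemma oscale0 x : oscale 0 x = ozero.
Proof. case: x => ????; octring. Qed.
Lemma otrD x y : otr (oadd x y) = otr x + otr y.
Proof. rewrite /otr /=; ring. Qed.
Lemma otrZ c x : otr (oscale c x) = c * otr x.
Proof. rewrite /otr /=; ring. Qed.
Lemma otr_comm x y : otr (omul x y) = otr (omul y x).
Proof. case: x => ???? ; case: y => ????; rewrite /otr /= !dot3E; ring. Qed.
Lemma onormD x y : onorm (oadd x y) = onorm x + onorm y + otr x * otr y - otr (omul x y).
Proof. case: x => ???? ; case: y => ????; rewrite /otr /onorm /= !dot3E !mxE; ring. Qed.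
Lemma onormZ c x : onorm (oscale c x) = c ^+ 2 * onorm x.
Proof. case: x => ????; rewrite /onorm /= !dot3E !mxE; ring. Qed.

Lemma swap_id u y z :
  oadd (omul (omul u y) z) (omul (omul u z) y) =
  oadd (oadd (oscale (otr y) (omul u z)) (oscale (otr z) (omul u y)))
       (oscale (- (otr y * otr z - otr (omul z y))) u).
Proof. case: u => ???? ; case: y => ????; case: z => ????; octring. Qed.

Lemma dup_id u y :
  omul (omul u y) y = oadd (oscale (otr y) (omul u y)) (oscale (- onorm y) u).
Proof. case: u => ???? ; case: y => ????; octring. Qed.

End Oc.

Section Oc2.
Variable F : fieldType.
Local Notation O := (oct F).
Local Notation ozero := (@ozero F).
Local Notation oone := (@oone F).

Definition prodl (xs : seq O) : O := foldl (@omul F) oone xs.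
Definition Tw (xs : seq O) : F := otr (prodl xs).

Lemma prodl_cat (xs ys : seq O) : prodl (xs ++ ys) = foldl (@omul F) (prodl xs) ys.
Proof. exact: foldl_cat. Qed.

Lemma foldlD (post : seq O) (x w : O) : foldl (@omul F) (oadd x w) post =
  oadd (foldl (@omul F) x post) (foldl (@omul F) w post).
Proof. by elim: post x w => //= v post IH x w; rewrite omulDl IH. Qed.

Lemma foldlZ (post : seq O) (c : F) (x : O) : foldl (@omul F) (oscale c x) post = oscale c (foldl (@omul F) x post).
Proof. by elim: post x => //= v post IH x; rewrite omulZl IH. Qed.

Lemma T1E (x : O) : Tw [:: x] = otr x.
Proof. by rewrite /Tw /prodl /= omul1l. Qed.

Lemma T2E (x y : O) : Tw [:: x; y] = otr (omul x y).
Proof. by rewrite /Tw /prodl /= omul1l. Qed.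

Lemma Tswap (pre : seq O) (y z : O) post :
  Tw (pre ++ y :: z :: post) + Tw (pre ++ z :: y :: post) =
  otr y * Tw (pre ++ z :: post) + otr z * Tw (pre ++ y :: post)
  - (otr y * otr z - Tw [:: z; y]) * Tw (pre ++ post).
Proof.
rewrite T2E /Tw !prodl_cat /=.
rewrite -otrD -foldlD swap_id !foldlD !foldlZ !otrD !otrZ; ring.
Qed.

Lemma Tdup (pre : seq O) (y : O) post :
  Tw (pre ++ y :: y :: post) = otr y * Tw (pre ++ y :: post) - onorm y * Tw (pre ++ post).
Proof.
rewrite /Tw !prodl_cat /= dup_id !foldlD !foldlZ !otrD !otrZ; ring.
Qed.

Definition combr (I : Type) (r : seq I) (G : I -> O) (c : I -> F) : O :=
  \big[@oadd F/ozero]_(k <- r) oscale (c k) (G k).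

Lemma Tlin (I : Type) (pre post : seq O) (r : seq I) (G : I -> O) (c : I -> F) :
  Tw (pre ++ combr r G c :: post) = \sum_(k <- r) c k * Tw (pre ++ G k :: post).
Proof.
pose g (x : O) := Tw (pre ++ x :: post).
have gD : {morph g : x y / oadd x y >-> x + y}.
  by move=> x y; rewrite /g /Tw !prodl_cat /= omulDr foldlD otrD.
have g0 : g ozero = 0.
  by rewrite /g /Tw prodl_cat /= -(oscale0 ozero) omulZr foldlZ otrZ mul0r.
have := big_morph g gD g0 r predT (fun k => oscale (c k) (G k)).
rewrite /g /combr => ->; apply: eq_bigr => k _.
by rewrite /Tw !prodl_cat /= omulZr foldlZ otrZ.
Qed.

Section Step1.
Variables (n : nat) (a b : 'I_n -> O) (d : nat).
Hypothesis Hd : (2 <= d)%N.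
Hypothesis Heq : forall f, inS d f -> f a = f b.

Definition good (w : seq 'I_n) := Tw (map a w) = Tw (map b w).

Lemma lprodE (x : 'I_n -> O) i s : lprod x i s = prodl (map x (i :: s)).
Proof.
rewrite /lprod /prodl /= omul1l.
by elim: s (x i) => //= j s IH v; rewrite IH.
Qed.

Lemma gen i s : sorted (fun p q : 'I_n => (p < q)%N) (i :: s) ->
  (size (i :: s) <= d)%N -> good (i :: s).
Proof.
move=> hs hsz; rewrite /good /Tw -!lprodE.
have H : inS d (fun t : 'I_n -> O => otr (lprod t i s)) by right; exists i, s.
exact: (Heq H).
Qed.

Lemma normeq i : onorm (a i) = onorm (b i).
Proof.
have H : inS d (fun t : 'I_n -> O => onorm (t i)) by left; exists i.
exact: (Heq H).
Qed.

Lemma good1 i : good [:: i].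
Proof. apply: gen => //=; lia. Qed.

Lemma otreq i : otr (a i) = otr (b i).
Proof. by have := good1 i; rewrite /good /= !T1E. Qed.

Lemma good2 i j : good [:: i; j].
Proof.
case: (ltngtP i j) => h.
- by apply: gen => //=; rewrite ?h //; lia.
- rewrite /good /= !T2E otr_comm [otr (omul (b i) _)]otr_comm -!T2E.
  by apply: (gen (i := j) (s := [:: i])) => //=; rewrite ?h //; lia.
- have e := ord_inj h; subst j.
  rewrite /good /=.
  have := Tdup [::] (a i) [::]; have := Tdup [::] (b i) [::]; rewrite /= => -> ->.
  by rewrite !T1E otreq normeq.
Qed.

Lemma swap_good pre y z post :
  (forall w, (size w < size (pre ++ y :: z :: post))%N -> good w) ->
  good (pre ++ y :: z :: post) <-> good (pre ++ z :: y :: post).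
Proof.
move=> Hs.
have Ea := Tswap (map a pre) (a y) (a z) (map a post).
have Eb := Tswap (map b pre) (b y) (b z) (map b post).
have g1 : good (pre ++ z :: post) by apply: Hs; rewrite !size_cat /=; lia.
have g2 : good (pre ++ y :: post) by apply: Hs; rewrite !size_cat /=; lia.
have g3 : good (pre ++ post) by apply: Hs; rewrite !size_cat /=; lia.
have g4 := good2 z y.
move: g1 g2 g3 g4; rewrite /good !map_cat /= => g1 g2 g3 g4.
move: Ea; rewrite g1 g2 g3 g4 !otreq -Eb => Ea.
by split => h; move: Ea; rewrite h; [move/addrI|move/addIr].
Qed.

Lemma dup_good pre y post :
  (forall w, (size w < size (pre ++ y :: y :: post))%N -> good w) ->
  good (pre ++ y :: y :: post).
Proof.
move=> Hs.
have g2 : good (pre ++ y :: post) by apply: Hs; rewrite !size_cat /=; lia.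
have g3 : good (pre ++ post) by apply: Hs; rewrite !size_cat /=; lia.
move: g2 g3; rewrite /good !map_cat /= !Tdup => -> ->.
by rewrite otreq normeq.
Qed.

Fixpoint ins (x : 'I_n) (s : seq 'I_n) : seq 'I_n :=
  match s with
  | [::] => [:: x]
  | y :: s' => if (x <= y)%N then x :: s else y :: ins x s'
  end.

Fixpoint isort (s : seq 'I_n) : seq 'I_n :=
  match s with [::] => [::] | x :: s' => ins x (isort s') end.

Lemma size_ins x s : size (ins x s) = (size s).+1.
Proof. by elim: s => //= y s IH; case: ifP => //= _; rewrite IH. Qed.

Lemma size_isort s : size (isort s) = size s.
Proof. by elim: s => //= x s IH; rewrite size_ins IH. Qed.

Local Notation le := (fun p q : 'I_n => (p <= q)%N).

Lemma ins_path s z x : path le z s -> le z x -> path le z (ins x s).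
Proof.
elim: s z => [|y s IH] z /=; first by move=> _ ->.
move=> /andP [hzy hp] hzx; case: ifP => hxy /=.
- by rewrite hzx hxy hp.
- rewrite hzy IH //; move/negbT: hxy; rewrite -ltnNge; exact: ltnW.
Qed.

Lemma ins_sorted x s : sorted le s -> sorted le (ins x s).
Proof.
case: s => [|y s] //= hp; case: ifP => hxy /=.
- by rewrite hxy hp.
- apply: ins_path => //; move/negbT: hxy; rewrite -ltnNge; exact: ltnW.
Qed.

Lemma isort_sorted s : sorted le (isort s).
Proof. by elim: s => //= x s IH; exact: ins_sorted. Qed.

Lemma sorted_cases s : sorted le s ->
  sorted (fun p q : 'I_n => (p < q)%N) s \/
  exists pre y post, s = pre ++ y :: y :: post.
Proof.
elim: s => [|x s IH] /=; first by left.
case: s IH => [|y s] IH /=; first by left.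
move=> /andP [hxy hp].
case: (IH hp) => [hl | [pre [z [post e]]]].
- case: (ltngtP x y) => h.
  + by left.
  + by move: hxy; rewrite leqNgt h.
  + right; exists [::], x, s; by rewrite (ord_inj h).
- right; exists (x :: pre), z, post; by rewrite e.
Qed.

Lemma ins_good K : (forall w, (size w < K)%N -> good w) ->
  forall s pre x, size (pre ++ x :: s) = K ->
  good (pre ++ x :: s) <-> good (pre ++ ins x s).
Proof.
move=> Hs; elim=> [|y s IH] pre x hK /=; first by [].
case: ifP => hxy; first by [].
apply: (iff_trans (swap_good _)); first by rewrite hK.
have e1 : pre ++ y :: x :: s = rcons pre y ++ x :: s by rewrite cat_rcons.
have e2 : pre ++ y :: ins x s = rcons pre y ++ ins x s by rewrite cat_rcons.
rewrite e1 e2; apply: IH.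
by rewrite -hK !size_cat /= size_rcons addSnnS.
Qed.

Lemma isort_good K : (forall w, (size w < K)%N -> good w) ->
  forall w pre, size (pre ++ w) = K ->
  good (pre ++ w) <-> good (pre ++ isort w).
Proof.
move=> Hs; elim=> [|x w IH] pre hK /=; first by [].
have e : pre ++ x :: w = rcons pre x ++ w by rewrite cat_rcons.
rewrite e; apply: (iff_trans (IH _ _)); first by rewrite -e.
rewrite cat_rcons; apply: (ins_good Hs).
by rewrite -hK !size_cat /= size_isort.
Qed.

Lemma main0 k w : (size w <= k)%N -> (k <= d)%N -> good w.
Proof.
elim: k w => [|k IH] w hw hd; first by case: w hw.
case: (ltnP (size w) k.+1) => [hlt|hge]; first by apply: IH; lia.
have Hs : forall w', (size w' < size w)%N -> good w'.
  move=> w' hw'; apply: IH; lia.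
have := @isort_good _ Hs w [::] erefl; move=> [_]; apply.
case: (sorted_cases (isort_sorted w)) => [hs | [pre [y [post e]]]].
- case E: (isort w) hs => [|i s] hs; first by [].
  apply: gen => //; rewrite -E size_isort; lia.
- rewrite e; apply: dup_good => w' hw'; apply: Hs.
  by rewrite -(size_isort w) e.
Qed.

Lemma main1 w : (size w <= d)%N -> good w.
Proof. by move=> h; apply: (main0 (k := size w)). Qed.

Lemma step2 (r : seq 'I_n) : forall (L : seq ('I_n -> F)) B,
  (size B + size L <= d)%N ->
  Tw (map a B ++ map (combr r a) L) = Tw (map b B ++ map (combr r b) L).
Proof.
elim=> [|c L IH] B hs; first by rewrite !cats0; apply: main1; lia.
rewrite /= !Tlin; apply: eq_bigr => k _; congr (_ * _).
have := IH (rcons B k); rewrite !map_rcons !cat_rcons; apply.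
rewrite size_rcons /=; simpl in hs; lia.
Qed.


Lemma combr_cons (r : seq 'I_n) k (x : 'I_n -> O) c :
  combr (k :: r) x c = oadd (oscale (c k) (x k)) (combr r x c).
Proof. by rewrite /combr big_cons. Qed.

Lemma step3 (r : seq 'I_n) c : onorm (combr r a c) = onorm (combr r b c).
Proof.
elim: r => [|k r IH]; first by rewrite /combr !big_nil.
rewrite !combr_cons !onormD !onormZ IH !otrZ !omulZl !otrZ otreq normeq.
have e1 := @step2 r [:: c] [::] (ltnW Hd).
have e2 := @step2 r [:: c] [:: k] Hd.
move: e1 e2; rewrite /= !T1E !T2E => -> ->.
by [].
Qed.

Lemma GLactE (x : 'I_n -> O) (A : 'M[F]_n) i :
  GLact x A i = combr (index_enum 'I_n) x (fun k => A k i).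
Proof.
rewrite [RHS]octeta /GLact /combr; congr Oct.
- by rewrite (big_morph (@o_a F) (id1 := 0) (op1 := +%R)).
- by rewrite (big_morph (@o_u F) (id1 := 0) (op1 := +%R)).
- by rewrite (big_morph (@o_v F) (id1 := 0) (op1 := +%R)).
- by rewrite (big_morph (@o_b F) (id1 := 0) (op1 := +%R)).
Qed.

Lemma Eq_GL (A : 'M[F]_n) f : inS d f -> f (GLact a A) = f (GLact b A).
Proof.
case=> [[i [hd ->]] | [i [s [hs [hsz ->]]]]] /=.
- by rewrite !GLactE; apply: step3.
- rewrite !lprodE.
  have em (x : 'I_n -> O) : map (GLact x A) (i :: s) =
      map (combr (index_enum 'I_n) x) (map (fun j k => A k j) (i :: s)).
    by rewrite -map_comp; apply: eq_map => j; rewrite /= GLactE.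
  rewrite !em.
  have := @step2 (index_enum 'I_n) (map (fun j k => A k j) (i :: s)) [::]; rewrite /Tw /=; apply; by rewrite size_map.
Qed.

End Step1.

Section GL.
Variable n : nat.
Implicit Types (A B : 'M[F]_n) (x : 'I_n -> O).

Lemma sum_compV (V : lmodType F) A B i (v : 'I_n -> V) :
  \sum_(k < n) B k i *: \sum_(l < n) A l k *: v l = \sum_(l < n) (A *m B) l i *: v l.
Proof.
under eq_bigr do rewrite scaler_sumr.
rewrite exchange_big /=; apply: eq_bigr => l _.
rewrite mxE scaler_suml; apply: eq_bigr => k _.
by rewrite scalerA mulrC.
Qed.

Lemma sum_compS A B i (v : 'I_n -> F) :
  \sum_(k < n) B k i * \sum_(l < n) A l k * v l = \sum_(l < n) (A *m B) l i * v l.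
Proof.
under eq_bigr do rewrite mulr_sumr.
rewrite exchange_big /=; apply: eq_bigr => l _.
rewrite mxE mulr_suml; apply: eq_bigr => k _.
ring.
Qed.

Lemma GLact_comp x A B : GLact (GLact x A) B = GLact x (A *m B).
Proof.
apply: functional_extensionality => i; rewrite /GLact /=.
by rewrite !sum_compS !sum_compV.
Qed.

Lemma sum_deltaV (V : lmodType F) i (v : 'I_n -> V) :
  \sum_(k < n) (1%:M : 'M[F]_n) k i *: v k = v i.
Proof.
rewrite (bigD1 i) //= big1 => [|k hk]; first by rewrite mxE eqxx scale1r addr0.
by rewrite mxE (negbTE hk) scale0r.
Qed.

Lemma sum_deltaS i (v : 'I_n -> F) :
  \sum_(k < n) (1%:M : 'M[F]_n) k i * v k = v i.
Proof.
rewrite (bigD1 i) //= big1 => [|k hk]; first by rewrite mxE eqxx mul1r addr0.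
by rewrite mxE (negbTE hk) mul0r.
Qed.

Lemma GLact1 x : GLact x 1%:M = x.
Proof.
apply: functional_extensionality => i; rewrite /GLact /=.
by rewrite !sum_deltaS !sum_deltaV -octeta.
Qed.

Lemma GLact_inv x A : A \in unitmx -> GLact (GLact x A) (invmx A) = x.
Proof. by move=> hA; rewrite GLact_comp mulmxV // GLact1. Qed.

Lemma GLact_invK x A : A \in unitmx -> GLact (GLact x (invmx A)) A = x.
Proof. by move=> hA; rewrite GLact_comp mulVmx // GLact1. Qed.

Lemma G2_id : is_G2 (@id O).
Proof. by split => //; exists id. Qed.

Lemma G2_comp (g h : O -> O) : is_G2 g -> is_G2 h -> is_G2 (g \o h).
Proof.
case=> gb ga gs gm [hb ha hs hm]; split.
- exact: bij_comp.
- by move=> ??; rewrite /= ha ga.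
- by move=> ??; rewrite /= hs gs.
- by move=> ??; rewrite /= hm gm.
Qed.

Lemma G2_inv (g : O -> O) : is_G2 g ->
  exists g', [/\ is_G2 g', cancel g g' & cancel g' g].
Proof.
case=> gb ga gs gm; have [g' gK g'K] := gb.
have gi := bij_inj gb.
exists g'; split => //; split.
- by exists g.
- by move=> u v; apply: gi; rewrite ga !g'K.
- by move=> c u; apply: gi; rewrite gs !g'K.
- by move=> u v; apply: gi; rewrite gm !g'K.
Qed.

Lemma G2_0 (g : O -> O) : is_G2 g -> g ozero = ozero.
Proof. by case=> _ _ gs _; rewrite -{1}(oscale0 ozero) gs !oscale0. Qed.

Lemma G2_combr (g : O -> O) (r : seq 'I_n) x c : is_G2 g ->
  g (combr r x c) = combr r (fun i => g (x i)) c.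
Proof.
move=> hg; have g0 := G2_0 hg; case: hg => _ ga gs _.
rewrite /combr (big_morph g ga g0); apply: eq_bigr => k _; exact: gs.
Qed.

Lemma G2act_GL (g : O -> O) x A : is_G2 g ->
  GLact (G2act g x) A = G2act g (GLact x A).
Proof.
move=> hg; apply: functional_extensionality => i.
by rewrite /G2act !GLactE G2_combr.
Qed.

Lemma orbit_char x y :
  (forall z, G2orbit x z <-> G2orbit y z) <-> exists g, is_G2 g /\ y = G2act g x.
Proof.
split.
- move=> H; have : G2orbit y y by exists id; split; [exact: G2_id|].
  by move/H.
- case=> g [hg ->] z; split.
  + case=> h [hh ->]; have [g' [hg' gK g'K]] := G2_inv hg.
    exists (h \o g'); split; first exact: G2_comp.
    by apply: functional_extensionality => i; rewrite /G2act /= gK.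
  + case=> h [hh ->]; exists (h \o g); split; first exact: G2_comp.
    by [].
Qed.

Lemma orbit_GL x A z : A \in unitmx ->
  G2orbit (GLact x A) z <-> G2orbit x (GLact z (invmx A)).
Proof.
move=> hA; split.
- case=> g [hg ->]; exists g; split => //.
  by rewrite -G2act_GL // GLact_inv.
- case=> g [hg e]; exists g; split => //.
  by rewrite -G2act_GL // -e GLact_invK.
Qed.

Lemma polyfun_sum (r : seq 'I_n) (G : 'I_n -> ('I_n -> O) -> F) :
  (forall k, polyfun (G k)) -> polyfun (fun x => \sum_(k <- r) G k x).
Proof.
move=> hG; elim: r => [|k r IH].
- have -> : (fun x : 'I_n -> O => \sum_(k <- [::]) G k x) = fun _ => 0.
    by apply: functional_extensionality => x; rewrite big_nil.
  exact: pf_const.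
- have -> : (fun x : 'I_n -> O => \sum_(j <- k :: r) G j x) =
            fun x => G k x + \sum_(j <- r) G j x.
    by apply: functional_extensionality => x; rewrite big_cons.
  exact: pf_add.
Qed.

Lemma polyfun_GL A f : polyfun f -> polyfun (fun x => f (GLact x A)).
Proof.
elim=> [c|i|i|i j|i j|f1 f2 _ IH1 _ IH2|f1 f2 _ IH1 _ IH2].
- exact: pf_const.
- apply: (@polyfun_sum (index_enum 'I_n) (fun k x => A k i * o_a (x k))) => k.
  by apply: pf_mul; [apply: pf_const|apply: pf_a].
- apply: (@polyfun_sum (index_enum 'I_n) (fun k x => A k i * o_b (x k))) => k.
  by apply: pf_mul; [apply: pf_const|apply: pf_b].
- have -> : (fun x : 'I_n -> O => o_u (GLact x A i) 0 j) =
            fun x => \sum_(k < n) A k i * o_u (x k) 0 j.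
    apply: functional_extensionality => x; rewrite /= summxE.
    by apply: eq_bigr => k _; rewrite mxE.
  apply: (@polyfun_sum (index_enum 'I_n) (fun k x => A k i * o_u (x k) 0 j)) => k.
  by apply: pf_mul; [apply: pf_const|apply: pf_u].
- have -> : (fun x : 'I_n -> O => o_v (GLact x A i) 0 j) =
            fun x => \sum_(k < n) A k i * o_v (x k) 0 j.
    apply: functional_extensionality => x; rewrite /= summxE.
    by apply: eq_bigr => k _; rewrite mxE.
  apply: (@polyfun_sum (index_enum 'I_n) (fun k x => A k i * o_v (x k) 0 j)) => k.
  by apply: pf_mul; [apply: pf_const|apply: pf_v].
- exact: pf_add.
- exact: pf_mul.
Qed.

Lemma closed_GL A (X : ('I_n -> O) -> Prop) :
  zariski_closed X -> zariski_closed (fun x => X (GLact x A)).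
Proof.
case=> P [hP hX].
exists (fun f' => exists f, P f /\ f' = fun x => f (GLact x A)); split.
- by move=> f' [f [pf ->]]; apply: polyfun_GL; apply: hP.
- move=> x; split.
  + by move/hX => H f' [f [pf ->]]; apply: H.
  + move=> H; apply/hX => f pf; exact: (H _ (ex_intro _ f (conj pf erefl))).
Qed.

Lemma closed_ext (X Y : ('I_n -> O) -> Prop) :
  (forall x, X x <-> Y x) -> zariski_closed X -> zariski_closed Y.
Proof.
move=> hXY [P [hP hX]]; exists P; split => // x.
by apply: iff_trans (iff_sym (hXY x)) (hX x).
Qed.

End GL.
End Oc2.

Theorem lemma7p2 (F : closedFieldType) (hF : 2%N \in [pchar F]) (n : nat)
    (a b : 'I_n -> oct F) (A : 'M[F]_n) (hA : A \in unitmx) :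
  [/\ (forall x, G2orbit a x <-> G2orbit b x) <->
        (forall x, G2orbit (GLact a A) x <-> G2orbit (GLact b A) x),
      (forall d : nat, (2 <= d)%N ->
        (forall f, inS d f -> f a = f b) <->
        (forall f, inS d f -> f (GLact a A) = f (GLact b A))) &
      zariski_closed (G2orbit a) <-> zariski_closed (G2orbit (GLact a A))].
Proof.
have hAi : invmx A \in unitmx by rewrite unitmx_inv.
split.
- rewrite !orbit_char; split => [[g [hg e]]|[g [hg e]]].
  + by exists g; split => //; rewrite e G2act_GL.
  + exists g; split => //.
    have := congr1 (fun y => GLact y (invmx A)) e.
    by rewrite /= G2act_GL // !GLact_inv.
- move=> d hd; split => H f hf.
  + exact: (Eq_GL hd H A hf).
  + have := Eq_GL hd H (invmx A) hf.
    by rewrite !GLact_inv.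
- split => hc.
  + apply: closed_ext (closed_GL (invmx A) hc) => x.
    exact: iff_sym (orbit_GL _ _ hA).
  + apply: closed_ext (closed_GL A hc) => x.
    by rewrite orbit_GL // GLact_inv.
Qed.
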